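(* Let $\mathcal{F}$ be a family of $n$ pseudo-parabolas in the plane and let $k$ be a positive integer. Then the number of intersection points of two curves in $\mathcal{F}$ that lie strictly above at most $k-2$ other curves in $\mathcal{F}$ is at most $2(k-1)n$.
   Context: A family of pseudo-parabolas is a family of bi-infinite $x$-monotone curves in the plane (graphs of continuous functions defined on all of $\mathbb{R}$), every two of which intersect in at most two points. *)

(* Defs.v *)
From HB Require Import structures.
From mathcomp Require Import all_boot all_order all_algebra.
From mathcomp Require Import all_classical all_reals topology normedtype.
Set Implicit Arguments. Unset Strict Implicit. Unset Printing Implicit Defensive.
Import Order.TTheory GRing.Theory Num.Theory numFieldNormedType.Exports.
Local Open Scope ring_scope.

(* A family of n pseudo-parabolas: n graphs of continuous functions R -> R,
   every two distinct members meeting in at most two points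
   (a point of intersection of the graphs of f i and f j is determined by
   its abscissa x with f i x = f j x). *)
Definition pseudo_parabola_family (R : realType) (n : nat) (f : 'I_n -> R -> R) :=
  (forall i, continuous (f i)) /\
  (forall i j : 'I_n, i != j ->
     forall s : seq R, uniq s -> (forall x, x \in s -> f i x = f j x) ->
     (size s <= 2)%N).

Definition is_intersection_point (R : realType) (n : nat) (f : 'I_n -> R -> R)
  (p : R * R) : Prop :=
  exists i j : 'I_n, i != j /\ f i p.1 = p.2 /\ f j p.1 = p.2.

Definition nb_below (R : realType) (n : nat) (f : 'I_n -> R -> R) (p : R * R) : nat :=
  #|[pred j : 'I_n | f j p.1 < p.2]|.

(* Main.v *)
Require Import Defs.
From mathcomp Require Import all_boot all_order all_algebra.
From mathcomp Require Import all_classical all_reals topology normedtype.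
Import Order.TTheory GRing.Theory Num.Theory numFieldNormedType.Exports.
Local Open Scope classical_set_scope.
Local Open Scope ring_scope.

Lemma ivt0 (R : realType) (g : R -> R) (u z : R) : continuous g ->
  g u < 0 -> 0 < g z -> exists c, ((u <= c <= z) || (z <= c <= u)) /\ g c = 0.
Proof.
move=> cg gu gz.
have cw : forall a b : R, {within `[a, b], continuous g}.
  by move=> a b; apply: continuous_subspaceT.
have [uz|zu] := leP u z.
  have h : Num.min (g u) (g z) <= 0 <= Num.max (g u) (g z).
    by rewrite ge_min (ltW gu) le_max (ltW gz) orbT.
  have [c cin gc] := IVT uz (cw _ _) h.
  rewrite in_itv /= in cin; by exists c; rewrite cin.
have h : Num.min (g z) (g u) <= 0 <= Num.max (g z) (g u).
  by rewrite ge_min (ltW gu) le_max (ltW gz) orbT.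
have [c cin gc] := IVT (ltW zu) (cw _ _) h.
rewrite in_itv /= in cin; by exists c; rewrite cin orbT.
Qed.

Definition side {R : realType} (b : bool) (x z : R) := if b then z < x else x < z.

Lemma side_lemma (R : realType) (f1 f2 : R -> R) (b : bool) (x u : R) :
  continuous f1 -> continuous f2 ->
  (forall z, side b x z -> f1 z != f2 z) -> side b x u -> f1 u < f2 u ->
  forall z, side b x z -> f1 z < f2 z.
Proof.
move=> c1 c2 nz su fu z sz.
have := nz z sz; rewrite neq_lt => /orP[//|h].
have cg : continuous (fun t => f1 t - f2 t).
  by move=> t; exact: (continuousB (c1 t) (c2 t)).
have g1 : f1 u - f2 u < 0 by rewrite subr_lt0.
have g2 : 0 < f1 z - f2 z by rewrite subr_gt0.
have [c [cb gc]] := @ivt0 _ _ u z cg g1 g2.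
have sc : side b x c.
  move: su sz cb; rewrite /side; case: (b) => su sz /orP[/andP[h1 h2]|/andP[h1 h2]].
  - exact: le_lt_trans h2 sz.
  - exact: le_lt_trans h2 su.
  - exact: lt_le_trans su h1.
  - exact: lt_le_trans sz h1.
by move: (nz c sc); rewrite -subr_eq0 gc eqxx.
Qed.

Arguments side_lemma {R f1 f2 b x u}.
Arguments ivt0 {R g u z}.

Lemma classify (R : realType) (n : nat) (f : 'I_n -> R -> R) :
  pseudo_parabola_family f -> forall (i j : 'I_n) (x : R), i != j -> f i x = f j x ->
  exists (W X : 'I_n) (b : bool),
    [/\ f W x = f i x, f X x = f i x, W != X & forall z, side b x z -> f W z < f X z].
Proof.
move=> [cf pp] i j x ij e.
have no3 : forall z1 z2, z1 < x -> x < z2 -> f i z1 = f j z1 -> f i z2 = f j z2 -> False.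
  move=> z1 z2 h1 h2 e1 e2.
  have : (size [:: z1; x; z2] <= 2)%N.
    apply: (pp i j ij).
      by rewrite /= !inE negb_or (lt_eqF h1) (lt_eqF (lt_trans h1 h2)) (lt_eqF h2).
    by move=> y; rewrite !inE => /or3P[]/eqP->.
  by [].
have [b nzb] : exists b, forall z, side b x z -> f i z != f j z.
  case: (pselect (exists z, z < x /\ f i z = f j z)) => [[z1 [h1 e1]]|nl].
    by exists false => z2 h2; apply/eqP => e2; exact: (no3 z1 z2).
  by exists true => z h; apply/eqP => e2; apply: nl; exists z.
pose u := if b then x - 1 else x + 1.
have su : side b x u.
  by rewrite /side /u; case: (b); rewrite ?ltrBlDr ltrDl ltr01.
have := nzb u su; rewrite neq_lt => /orP[h|h].
  exists i, j, b; split; [done | by rewrite e | done | ].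
  exact: (side_lemma (cf i) (cf j) nzb su h).
exists j, i, b; split; [by rewrite e | done | by rewrite eq_sym | ].
apply: (side_lemma (cf j) (cf i) _ su h).
by move=> z sz; rewrite eq_sym; apply: nzb.
Qed.

Lemma side_trans (R : realType) (b : bool) (x y z : R) :
  side b x y -> side b y z -> side b x z.
Proof. by rewrite /side; case: b => h1 h2; [exact: lt_trans h2 h1 | exact: lt_trans h1 h2]. Qed.

Lemma side_tot (R : realType) (b : bool) (x y : R) :
  [\/ x = y, side b x y | side b y x].
Proof.
rewrite /side; case: b; have [h|h|h] := ltgtP x y.
- by apply: Or33.
- by apply: Or32.
- by apply: Or31.
- by apply: Or32.
- by apply: Or33.
- by apply: Or31.
Qed.

Arguments side_trans {R b x y z}.
Arguments side_tot {R}.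

Lemma ext_exists (R : realType) (b : bool) (P : seq (R * R)) : P != [::] ->
  exists2 p0, p0 \in P & forall q, q \in P -> q.1 = p0.1 \/ side b q.1 p0.1.
Proof.
elim: P => [//|a P IH] _.
case: (eqVneq P [::]) => [->|nP].
  by exists a; rewrite ?inE // => q; rewrite inE => /eqP->; left.
have [p0 p0P hp0] := IH nP.
have [e|h|h] := side_tot b a.1 p0.1.
- exists p0; first by rewrite inE p0P orbT.
  by move=> q; rewrite inE => /orP[/eqP->|/hp0]; [left|].
- exists p0; first by rewrite inE p0P orbT.
  by move=> q; rewrite inE => /orP[/eqP->|/hp0]; [right|].
- exists a; first by rewrite inE eqxx.
  move=> q; rewrite inE => /orP[/eqP->|/hp0]; first by left.
  case=> [->|hq]; first by right.
  by right; exact: side_trans hq h.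
Qed.

Arguments ext_exists {R}.

Lemma fiber (R : realType) (n : nat) (f : 'I_n -> R -> R) (X : 'I_n) (b : bool)
  (W : R * R -> 'I_n) (k : nat) (P : seq (R * R)) :
  uniq P ->
  (forall p, p \in P -> [/\ f X p.1 = p.2, f (W p) p.1 = p.2 & (nb_below f p + 2 <= k)%N]) ->
  (forall p q, p \in P -> q \in P -> side b q.1 p.1 -> f (W q) p.1 < f X p.1) ->
  (size P <= k - 1)%N.
Proof.
move=> uP hP hW.
case: (eqVneq P [::]) => [->//|nP].
have [p0 p0P hp0] := ext_exists b P nP.
have [X0 _ lek] := hP p0 p0P.
have onX : forall q q', q \in P -> q' \in P -> q.1 = q'.1 -> q = q'.
  move=> q q' qP q'P e; have [Xq _ _] := hP q qP; have [Xq' _ _] := hP q' q'P.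
  move: Xq Xq' e; case: q {qP} => a1 a2; case: q' {q'P} => b1 b2 /= <- <- ->.
  by [].
have eqpt : forall q, q \in P -> q.1 = p0.1 -> q = p0.
  by move=> q qP e; apply: onX.
pose Q := rem p0 P.
have QP : forall q, q \in Q -> q \in P /\ q != p0.
  move=> q; rewrite /Q (rem_filter _ uP) mem_filter /= => /andP[h1 h2]; by split.
have uQ : uniq Q by rewrite /Q rem_uniq.
have injW : {in Q &, injective W}.
  move=> q q' /QP[qP _] /QP[q'P _] eW.
  have [e|h|h] := side_tot b q.1 q'.1.
  - exact: onX.
  - have := hW q' q q'P qP h; rewrite eW.
    by have [Xq' Wq' _] := hP q' q'P; rewrite Xq' Wq' ltxx.
  - have := hW q q' qP q'P h; rewrite -eW.
    by have [Xq Wq _] := hP q qP; rewrite Xq Wq ltxx.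
have sub : {subset map W Q <= enum [pred j : 'I_n | f j p0.1 < p0.2]}.
  move=> j /mapP[q qQ ->]; rewrite mem_enum inE.
  have [qP qn] := QP q qQ.
  have := hp0 q qP; case=> [e|h]; first by move: qn; rewrite (eqpt q qP e) eqxx.
  by rewrite -X0; exact: hW.
have uWQ : uniq (map W Q) by rewrite (map_inj_in_uniq injW).
have := uniq_leq_size uWQ sub.
rewrite size_map -cardE /Q size_rem // => h.
have h2 : ((size P).-1 + 2 <= k)%N by apply: leq_trans lek; rewrite leq_add2r.
move: h2; case: (size P) => [|m] /= h2; first by [].
by rewrite subn1 /=; move: h2; rewrite addn2; case: (k) => [|k'] //=.
Qed.

Lemma size_sum_count (T : eqType) (C : finType) (phi : T -> C) (s : seq T) :
  size s = (\sum_(c : C) count (fun p => phi p == c) s)%N.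
Proof.
elim: s => [|a s IH] /=; first by rewrite big1.
rewrite IH -add1n big_split /=; congr (_ + _)%N.
rewrite (bigD1 (phi a)) //= eqxx big1 // => c /negbTE.
by rewrite eq_sym => ->.
Qed.

Theorem theorem4 (R : realType) (n k : nat) (f : 'I_n -> R -> R) :
  pseudo_parabola_family f -> (0 < k)%N ->
  forall s : seq (R * R), uniq s ->
  (forall p, p \in s -> is_intersection_point f p /\ (nb_below f p + 2 <= k)%N) ->
  (size s <= 2 * (k - 1) * n)%N.
Proof.
move=> pf k0 s us hs.
case: (eqVneq s [::]) => [->//|ns].
have [i0 _] : exists i0 : 'I_n, True.
  case: s ns hs {us} => [//|p s'] _ hs.
  by have [[i [j _]] _] := hs p (mem_head _ _); exists i.
have hex : forall p : R * R, exists t : 'I_n * 'I_n * bool, p \in s ->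
   [/\ f t.1.1 p.1 = p.2, f t.1.2 p.1 = p.2 &
       forall z, side t.2 p.1 z -> f t.1.1 z < f t.1.2 z].
  move=> p; case: (boolP (p \in s)) => ps; last by exists (i0, i0, true).
  have [[i [j [ij [ei ej]]]] _] := hs p ps.
  have [W [X [b [eW eX _ hz]]]] := @classify _ _ _ pf _ _ _ ij (etrans ei (esym ej)).
  by exists (W, X, b) => _; rewrite eW eX ei.
have [g hg] := choice hex.
pose phi (p : R * R) := ((g p).1.2, (g p).2).
rewrite (@size_sum_count _ _ phi).
apply: (@leq_trans (\sum_(c : 'I_n * bool) (k - 1))%N).
  apply: leq_sum => c _.
  rewrite -size_filter.
  apply: (@fiber R n f c.1 c.2 (fun p => (g p).1.1) k).
  - exact: filter_uniq.
  - move=> p; rewrite mem_filter => /andP[/eqP <- ps] /=.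
    by have [e1 e2 _] := hg p ps; have [_ hk] := hs p ps; split.
  - move=> p q; rewrite !mem_filter => /andP[/eqP ep ps] /andP[/eqP eqq qs].
    have [_ _ hz] := hg q qs.
    by rewrite -eqq /= => sd; exact: hz.
rewrite sum_nat_const card_prod card_ord card_bool.
by rewrite [X in (_ <= X)%N]mulnC mulnA.
Qed.
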